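(* Let $p$ be a rational prime with $p\equiv1\pmod 8$. Then there exist positive integers $a,b$ with $p=(a+b\sqrt2)(a-b\sqrt2)$, and for such $a,b$ there exists $\alpha\in\mathbb{Z}[\zeta_8]$ such that $$a+b\sqrt2=\sigma_1(\alpha)\sigma_7(\alpha),\qquad a-b\sqrt2=\sigma_3(\alpha)\sigma_5(\alpha),$$ and $$\|\Sigma_{\mathbb{Q}(\zeta_8)}(\alpha)\|^2=2\sigma_1(\alpha)\sigma_7(\alpha)+2\sigma_3(\alpha)\sigma_5(\alpha)=4a.$$
   Context: $\zeta_8=e^{2\pi i/8}$, $\sqrt2=\zeta_8+\zeta_8^{7}$. For $i\in\{1,3,5,7\}$, $\sigma_i$ is the automorphism of $\mathbb{Q}(\zeta_8)$ with $\sigma_i(\zeta_8)=\zeta_8^i$. The canonical embedding norm is $\|\Sigma_{\mathbb{Q}(\zeta_8)}(x)\|^2=\sum_{i\in\{1,3,5,7\}}|\sigma_i(x)|^2$. *)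

(* Defs.v *)
From mathcomp Require Import all_boot all_order all_algebra all_field.
Set Implicit Arguments. Unset Strict Implicit. Unset Printing Implicit Defensive.
Import Order.TTheory GRing.Theory Num.Theory.
Local Open Scope ring_scope.

(* zeta_8 = e^{2 pi i/8} = (sqrt 2 / 2) (1 + i), as an element of algC. *)
Definition zeta8 : algC := sqrtC 2 / 2 * (1 + 'i).

Definition sqrt2 : algC := zeta8 + zeta8 ^+ 7.

(* An element of Z[zeta_8] is c_0 + c_1 z + c_2 z^2 + c_3 z^3 with c_k in Z
   ({1,z,z^2,z^3} is a Z-basis).  The embedding/automorphism sigma_i sends
   zeta_8 to zeta_8^i, hence acts on coefficient vectors as below. *)
Definition zelt (c : 'I_4 -> int) : algC :=
  \sum_(k < 4) (c k)%:~R * zeta8 ^+ k.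

Definition sigma (i : nat) (c : 'I_4 -> int) : algC :=
  \sum_(k < 4) (c k)%:~R * zeta8 ^+ (i * k).

Definition canon_norm2 (c : 'I_4 -> int) : algC :=
  \sum_(i <- [:: 1; 3; 5; 7]%N) `|sigma i c| ^+ 2.

(* Main.v *)
Require Import Defs.
From mathcomp Require Import all_boot all_order all_algebra all_field.
From mathcomp Require Import ring lra zify.
Import Order.TTheory GRing.Theory Num.Theory.
Local Open Scope ring_scope.

Lemma irr2n (X Y : nat) : (X ^ 2 = 2 * Y ^ 2)%N -> Y = 0%N.
Proof.
move=> h; case: (posnP Y) => // Yp.
have Xp : (0 < X)%N by case: X h => // h; nia.
have := congr1 (logn 2) h.
rewrite lognM // ?expn_gt0 ?Yp // !lognX (@logn_prime 2 2) //=.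
lia.
Qed.
Lemma irr2 (x y : int) : x ^+ 2 = 2 * y ^+ 2 -> y = 0.
Proof.
move=> h; apply/eqP; rewrite -absz_eq0; apply/eqP; apply: (@irr2n `|x|%N).
have := congr1 absz h. rewrite abszM !abszX. done.
Qed.

Record V := mkV { v0 : int; v1 : int; v2 : int; v3 : int }.
Definition vmul (x y : V) : V :=
  mkV (v0 x * v0 y - v1 x * v3 y - v2 x * v2 y - v3 x * v1 y)
      (v0 x * v1 y + v1 x * v0 y - v2 x * v3 y - v3 x * v2 y)
      (v0 x * v2 y + v1 x * v1 y + v2 x * v0 y - v3 x * v3 y)
      (v0 x * v3 y + v1 x * v2 y + v2 x * v1 y + v3 x * v0 y).
Definition vsub (x y : V) : V := mkV (v0 x - v0 y) (v1 x - v1 y) (v2 x - v2 y) (v3 x - v3 y).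
Definition vadd (x y : V) : V := mkV (v0 x + v0 y) (v1 x + v1 y) (v2 x + v2 y) (v3 x + v3 y).
Definition vc (n : int) : V := mkV n 0 0 0.
Definition s3 (x : V) : V := mkV (v0 x) (v3 x) (- v2 x) (v1 x).
Definition s5 (x : V) : V := mkV (v0 x) (- v1 x) (v2 x) (- v3 x).
Definition s7 (x : V) : V := mkV (v0 x) (- v3 x) (- v2 x) (- v1 x).
Definition NA (x : V) : int := v0 x ^+ 2 + v1 x ^+ 2 + v2 x ^+ 2 + v3 x ^+ 2.
Definition NB (x : V) : int := v0 x * v1 x + v1 x * v2 x + v2 x * v3 x - v3 x * v0 x.
Definition Nv (x : V) : int := NA x ^+ 2 - 2 * NB x ^+ 2.
Definition vinv (x : V) : V := vmul (vmul (s3 x) (s5 x)) (s7 x).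

Ltac vring := repeat match goal with x : V |- _ => destruct x end;
  rewrite /vmul /vsub /vadd /vc /s3 /s5 /s7 /vinv /=; congr mkV; ring.

Lemma NvM x y : Nv (vmul x y) = Nv x * Nv y.
Proof. case: x => a b c d; case: y => e f g h; rewrite /Nv /NA /NB /=. ring. Qed.

Lemma vinvP x : vmul x (vinv x) = vc (Nv x).
Proof. rewrite /Nv /NA /NB; vring. Qed.

Lemma vmulC x y : vmul x y = vmul y x. Proof. vring. Qed.
Lemma vmulA x y w : vmul x (vmul y w) = vmul (vmul x y) w. Proof. vring. Qed.
Lemma vmul1 x : vmul x (vc 1) = x. Proof. vring. Qed.
Lemma vmulc x n m : vmul (vmul x (vc n)) (vc m) = vmul x (vc (n * m)). Proof. vring. Qed.
Lemma s7M x y : s7 (vmul x y) = vmul (s7 x) (s7 y). Proof. vring. Qed.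

Lemma Nvc n : Nv (vc n) = n ^+ 4.
Proof. rewrite /Nv /NA /NB /=; ring. Qed.

Lemma Nv_ge0 x : 0 <= Nv x.
Proof.
case: x => a b c d; rewrite /Nv /NA /NB /=.
set X := b ^+ 2 + d ^+ 2; set Y := a ^+ 2 + c ^+ 2.
have h1 : (a * b + b * c + c * d - d * a) ^+ 2 <= X * ((a + c) ^+ 2 + (c - a) ^+ 2).
  have -> : X * ((a + c) ^+ 2 + (c - a) ^+ 2) = (a * b + b * c + c * d - d * a) ^+ 2 + (b * (c - a) - d * (a + c)) ^+ 2 by rewrite /X; ring.
  by rewrite lerDl sqr_ge0.
have h2 : (a + c) ^+ 2 + (c - a) ^+ 2 = 2 * Y by rewrite /Y; ring.
have h3 : 4 * X * Y <= (a ^+ 2 + b ^+ 2 + c ^+ 2 + d ^+ 2) ^+ 2.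
  have -> : (a ^+ 2 + b ^+ 2 + c ^+ 2 + d ^+ 2) ^+ 2 = 4 * X * Y + (X - Y) ^+ 2 by rewrite /X /Y; ring.
  by rewrite lerDl sqr_ge0.
rewrite subr_ge0; apply: le_trans h3; rewrite h2 in h1.
have : 2 * (a * b + b * c + c * d - d * a) ^+ 2 <= 2 * (X * (2 * Y)) by rewrite ler_pM2l.
by move/le_trans; apply; rewrite le_eqVlt; apply/orP; left; apply/eqP; ring.
Qed.

Lemma Nv_eq0 x : Nv x = 0 -> x = vc 0.
Proof.
case: x => a b c d; rewrite /Nv /NA /NB /= => /eqP; rewrite subr_eq0 => /eqP h.
have hb := irr2 _ _ h. rewrite hb expr0n /= mulr0 in h.
move/eqP: h; rewrite sqrf_eq0 => /eqP h.
rewrite /vc; congr mkV; nia.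
Qed.

Lemma sq_lt {r n : int} : - n < 2 * r -> 2 * r < n -> 4 * r ^+ 2 < n ^+ 2.
Proof. move=> h1 h2; rewrite -subr_gt0.
have -> : n ^+ 2 - 4 * r ^+ 2 = (n - 2 * r) * (n + 2 * r) :> int by ring.
apply: mulr_gt0; lia.
Qed.
Lemma sq_le {r n : int} : - n <= 2 * r -> 2 * r < n -> 4 * r ^+ 2 <= n ^+ 2.
Proof. move=> h1 h2; rewrite -subr_ge0.
have -> : n ^+ 2 - 4 * r ^+ 2 = (n - 2 * r) * (n + 2 * r) :> int by ring.
apply: mulr_ge0; lia.
Qed.

Lemma fin_step {N A n : int} : N <= A ^+ 2 -> 0 <= A -> 4 * A < 4 * n ^+ 2 -> N < n ^+ 4.
Proof.
move=> h1 h2 h3; have h4 : A < n ^+ 2 by lia.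
have := ltrXn2r 2 h2 h4; rewrite /= -exprM => h5; apply: le_lt_trans h1 _; exact: h5.
Qed.

Lemma bound {r0 r1 r2 r3 n : int} : 0 < n ->
  - n <= 2 * r0 < n -> - n <= 2 * r1 < n -> - n <= 2 * r2 < n -> - n <= 2 * r3 < n ->
  Nv (mkV r0 r1 r2 r3) < n ^+ 4.
Proof.
move=> n0 /andP[a0 b0] /andP[a1 b1] /andP[a2 b2] /andP[a3 b3].
have NvA : Nv (mkV r0 r1 r2 r3) <= NA (mkV r0 r1 r2 r3) ^+ 2.
  by rewrite /Nv lerBlDr lerDl mulr_ge0 // sqr_ge0.
have Age : 0 <= NA (mkV r0 r1 r2 r3) by rewrite /NA /= !addr_ge0 // sqr_ge0.
have l0 := sq_le a0 b0; have l1 := sq_le a1 b1; have l2 := sq_le a2 b2; have l3 := sq_le a3 b3.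
case: (ltrP (- n) (2 * r0)) => [c0|c0].
  have s0 := sq_lt c0 b0; apply: (fin_step NvA Age); rewrite /NA /=; lia.
case: (ltrP (- n) (2 * r1)) => [c1|c1].
  have s0 := sq_lt c1 b1; apply: (fin_step NvA Age); rewrite /NA /=; lia.
case: (ltrP (- n) (2 * r2)) => [c2|c2].
  have s0 := sq_lt c2 b2; apply: (fin_step NvA Age); rewrite /NA /=; lia.
case: (ltrP (- n) (2 * r3)) => [c3|c3].
  have s0 := sq_lt c3 b3; apply: (fin_step NvA Age); rewrite /NA /=; lia.
have e0 : r1 = r0 by lia. have e1 : r2 = r0 by lia. have e2 : r3 = r0 by lia.
have en : n = - (2 * r0) by lia.
rewrite e0 e1 e2 en.
have -> : Nv (mkV r0 r0 r0 r0) = 8 * r0 ^+ 4 by rewrite /Nv /NA /NB /=; ring.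
have -> : (- (2 * r0)) ^+ 4 = 16 * r0 ^+ 4 by ring.
have r0n : r0 != 0 by apply/eqP => h; rewrite h in en; lia.
have : 0 < r0 ^+ 4 by rewrite exprn_even_gt0.
lia.
Qed.

Lemma rnd (x n : int) : 0 < n -> - n <= 2 * (x - ((2 * x + n) %/ (2 * n))%Z * n) < n.
Proof.
move=> n0.
have h := divz_eq (2 * x + n) (2 * n).
have n2 : 2 * n != 0 by rewrite mulf_neq0 // gt_eqF.
have m0 := modz_ge0 (2 * x + n) n2.
have m1 : ((2 * x + n) %% (2 * n))%Z < 2 * n by apply: ltz_pmod; rewrite mulr_gt0.
move: h m0 m1; set q := ((2 * x + n) %/ (2 * n))%Z; set m := ((2 * x + n) %% (2 * n))%Z.
move=> h m0 m1; apply/andP; split; lia.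
Qed.

Lemma vdiv c d : 0 < Nv d -> exists q, Nv (vsub c (vmul q d)) < Nv d.
Proof.
move=> n0; set n := Nv d.
set e := vmul c (vinv d).
pose rq x := ((2 * x + n) %/ (2 * n))%Z.
exists (mkV (rq (v0 e)) (rq (v1 e)) (rq (v2 e)) (rq (v3 e))).
set q := mkV _ _ _ _.
have E : vmul (vsub c (vmul q d)) (vinv d) = vsub e (vmul q (vmul d (vinv d))) by rewrite /e; vring.
rewrite vinvP -/n in E.
have E2 : vsub e (vmul q (vc n)) = mkV (v0 e - rq (v0 e) * n) (v1 e - rq (v1 e) * n)
   (v2 e - rq (v2 e) * n) (v3 e - rq (v3 e) * n) by rewrite /q; vring.
rewrite E2 in E.
have B := bound n0 (rnd (v0 e) n n0) (rnd (v1 e) n n0) (rnd (v2 e) n n0) (rnd (v3 e) n n0).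
rewrite -E NvM in B.
have I1 : n * Nv (vinv d) = n ^+ 4 by rewrite /n -NvM vinvP Nvc.
have I0 : 0 < Nv (vinv d).
  rewrite lt0r Nv_ge0 andbT; apply/eqP => h; rewrite h mulr0 in I1.
  by move: I1 => /esym/eqP; rewrite expf_eq0 /= gt_eqF.
rewrite -I1 in B.
by rewrite -(ltr_pM2r I0).
Qed.

Definition vdvd g x := exists k, x = vmul g k.

Lemma vgcd_aux (N : nat) : forall x y, (`|Nv y| <= N)%N ->
  exists g, (exists u w, g = vadd (vmul x u) (vmul y w)) /\ vdvd g x /\ vdvd g y.
Proof.
elim: N => [|N IH] x y hN.
- have y0 : y = vc 0 by apply: Nv_eq0; apply/eqP; rewrite -absz_eq0; lia.
  exists x; split; [exists (vc 1), (vc 0); rewrite y0; vring|].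
  split; [exists (vc 1); vring | exists (vc 0); rewrite y0; vring].
- case: (Nv y =P 0) => [/Nv_eq0 y0|ny].
    exists x; split; [exists (vc 1), (vc 0); rewrite y0; vring|].
    split; [exists (vc 1); vring | exists (vc 0); rewrite y0; vring].
  have yp : 0 < Nv y by rewrite lt0r Nv_ge0 andbT; apply/eqP.
  have [q hq] := vdiv x y yp.
  have hr : (`|Nv (vsub x (vmul q y))| <= N)%N.
    have := Nv_ge0 (vsub x (vmul q y)); move: hq hN; lia.
  have [g [[u [w hg]] [[k1 hk1] [k2 hk2]]]] := IH y _ hr.
  exists g; split.
    exists w, (vsub u (vmul q w)); rewrite hg; vring.
  split; last by exists k1.
  exists (vadd k2 (vmul q k1)).
  have -> : x = vadd (vsub x (vmul q y)) (vmul q y) by vring.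
  rewrite hk2 {1}hk1; vring.
Qed.

Lemma vgcd x y : exists g, (exists u w, g = vadd (vmul x u) (vmul y w)) /\ vdvd g x /\ vdvd g y.
Proof. exact: (@vgcd_aux _ x y (leqnn _)). Qed.

Definition ev {R : comNzRingType} (w : R) (x : V) : R :=
  (v0 x)%:~R + (v1 x)%:~R * w + (v2 x)%:~R * w ^+ 2 + (v3 x)%:~R * w ^+ 3.

Section Ev.
Variables (R : comNzRingType) (w : R).
Hypothesis h4 : w ^+ 4 = -1.
Lemma w5 : w ^+ 5 = - w. Proof. by rewrite (exprD w 4 1) h4 mulN1r. Qed.
Lemma w6 : w ^+ 6 = - w ^+ 2. Proof. by rewrite (exprD w 4 2) h4 mulN1r. Qed.
Lemma w7 : w ^+ 7 = - w ^+ 3. Proof. by rewrite (exprD w 4 3) h4 mulN1r. Qed.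
Lemma w8 : w ^+ 8 = 1. Proof. by rewrite (exprD w 4 4) h4 mulN1r opprK. Qed.
Lemma w9 : w ^+ 9 = w. Proof. by rewrite (exprD w 8 1) w8 mul1r. Qed.

Lemma evM x y : ev w (vmul x y) = ev w x * ev w y.
Proof.
case: x => a b c d; case: y => e f g h; rewrite /ev /vmul /=.
have -> : ((a%:~R + b%:~R * w + c%:~R * w ^+ 2 + d%:~R * w ^+ 3) *
   (e%:~R + f%:~R * w + g%:~R * w ^+ 2 + h%:~R * w ^+ 3) : R) =
  (a * e)%:~R + (a * f + b * e)%:~R * w + (a * g + b * f + c * e)%:~R * w ^+ 2
  + (a * h + b * g + c * f + d * e)%:~R * w ^+ 3 + (b * h + c * g + d * f)%:~R * w ^+ 4
  + (c * h + d * g)%:~R * w ^+ 5 + (d * h)%:~R * w ^+ 6 by ring.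
rewrite h4 w5 w6; ring.
Qed.

Lemma evB x y : ev w (vsub x y) = ev w x - ev w y.
Proof. case: x => a b c d; case: y => e f g h; rewrite /ev /vsub /=; ring. Qed.
Lemma evD x y : ev w (vadd x y) = ev w x + ev w y.
Proof. case: x => a b c d; case: y => e f g h; rewrite /ev /vadd /=; ring. Qed.
Lemma evc n : ev w (vc n) = n%:~R.
Proof. rewrite /ev /=; ring. Qed.

Lemma ev3 x : ev (w ^+ 3) x = ev w (s3 x).
Proof.
case: x => a b c d; rewrite /ev /s3 /= -!exprM /=.
have -> : (3 * 2 = 6)%N by []. have -> : (3 * 3 = 9)%N by [].
rewrite w6 w9; ring.
Qed.
Lemma ev5 x : ev (w ^+ 5) x = ev w (s5 x).
Proof.
case: x => a b c d; rewrite /ev /s5 /= -!exprM /=.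
have -> : (5 * 2 = 6 + 4)%N by []. have -> : (5 * 3 = 7 + 8)%N by [].
rewrite !exprD w5 w6 w7 w8 h4; ring.
Qed.
Lemma ev7 x : ev (w ^+ 7) x = ev w (s7 x).
Proof.
case: x => a b c d; rewrite /ev /s7 /= -!exprM /=.
have -> : (7 * 2 = 6 + 8)%N by []. have -> : (7 * 3 = 5 + 16)%N by [].
rewrite !exprD w5 w6 w7 (exprM w 8 2) w8 expr1n; ring.
Qed.
End Ev.

Lemma pell (n : nat) : forall u v : int, (`|v| <= n)%N -> 0 < u -> u ^+ 2 - 2 * v ^+ 2 = 1 ->
  exists e f : int, u = e ^+ 2 + 2 * f ^+ 2 /\ v = 2 * e * f.
Proof.
have zero : forall u v : int, v = 0 -> 0 < u -> u ^+ 2 - 2 * v ^+ 2 = 1 ->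
    exists e f : int, u = e ^+ 2 + 2 * f ^+ 2 /\ v = 2 * e * f.
  move=> u v -> u0 h; exists 1, 0; split; last by rewrite !mulr0.
  have : u ^+ 2 = 1 by move: h; rewrite expr0n /= mulr0 subr0.
  move=> h2; have : u = 1 by nia.
  by move=> ->; ring.
elim: n => [|n IH] u v hv u0 h.
  by apply: zero => //; apply/eqP; rewrite -absz_eq0; lia.
have pos : forall u v : int, 0 < v -> (`|v| <= n.+1)%N -> 0 < u -> u ^+ 2 - 2 * v ^+ 2 = 1 ->
    exists e f : int, u = e ^+ 2 + 2 * f ^+ 2 /\ v = 2 * e * f.
  clear hv u0 h; clear u v; move=> u v v0 hv u0 h.
  have c1 : v < u by nia.
  have c2 : u < 2 * v by nia.
  have c3 : 4 * v < 3 * u by nia.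
  have hv' : (absz (3 * v - 2 * u)%R <= n)%N by lia.
  have u0' : 0 < 3 * u - 4 * v by lia.
  have h' : (3 * u - 4 * v) ^+ 2 - 2 * (3 * v - 2 * u) ^+ 2 = 1 by transitivity (u ^+ 2 - 2 * v ^+ 2); [ring|done].
  have [e [f [he hf]]] := IH _ _ hv' u0' h'.
  exists (e + 2 * f), (e + f); split.
    have -> : u = 3 * (3 * u - 4 * v) + 4 * (3 * v - 2 * u) by ring.
    rewrite he hf; ring.
  have -> : v = 2 * (3 * u - 4 * v) + 3 * (3 * v - 2 * u) by ring.
  rewrite he hf; ring.
case: (ltrgt0P v) => [vp|vn|v0].
- exact: pos.
- have a1 : 0 < - v by rewrite oppr_gt0.
  have a2 : (`|- v| <= n.+1)%N by rewrite abszN.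
  have a3 : u ^+ 2 - 2 * (- v) ^+ 2 = 1 by rewrite sqrrN.
  have [e [f [he hf]]] := pos u (- v) a1 a2 u0 a3.
  exists e, (- f); split; first by rewrite he sqrrN.
  by rewrite mulrN -hf opprK.
- exact: zero.
Qed.

Lemma sqrt_ex n : exists m, (m ^ 2 <= n < m.+1 ^ 2)%N.
Proof.
elim: n => [|n [m /andP [h1 h2]]]; first by exists 0%N.
case: (ltnP n.+1 (m.+1 ^ 2)) => h3.
  by exists m; rewrite h3 andbT; lia.
exists m.+1; apply/andP; split; nia.
Qed.

Lemma fin_id (d : V) (e f : int) : vmul (vmul d (mkV e (-f) 0 f)) (s7 (vmul d (mkV e (-f) 0 f)))
  = vmul (vmul d (s7 d)) (vmul (mkV e (-f) 0 f) (mkV e (-f) 0 f)).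
Proof. vring. Qed.
Lemma U_id (e f : int) : vmul (mkV (e ^+ 2 + 2 * f ^+ 2) (2 * e * f) 0 (- (2 * e * f)))
   (vmul (mkV e (-f) 0 f) (mkV e (-f) 0 f)) = vc ((e ^+ 2 - 2 * f ^+ 2) ^+ 2).
Proof. vring. Qed.
Lemma D_id d : vmul d (s7 d) = mkV (NA d) (NB d) 0 (- NB d).
Proof. rewrite /NA /NB; vring. Qed.

Lemma diff_sq (i j m : nat) : (i <= m)%N -> (j <= m)%N -> (i%:Z - j%:Z) ^+ 2 <= (m ^ 2)%N%:Z.
Proof.
move=> hi hj; have -> : (m ^ 2)%N%:Z = m%:Z ^+ 2 by lia.
rewrite -subr_ge0.
have -> : m%:Z ^+ 2 - (i%:Z - j%:Z) ^+ 2 = (m%:Z - (i%:Z - j%:Z)) * (m%:Z + (i%:Z - j%:Z)) by ring.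
apply: mulr_ge0; lia.
Qed.

Lemma abs_lt (x : int) (n : nat) : x ^+ 2 < n%:Z -> (absz x < n)%N.
Proof.
move=> h.
have h1 : (absz x <= absz x ^ 2)%N.
  by case: (absz x) => // k; rewrite -{1}(expn1 k.+1) leq_pexp2l.
have h2 : (absz x ^ 2)%N = absz (x ^+ 2) by rewrite abszX.
have h3 := sqr_ge0 x.
move: h1; rewrite h2; lia.
Qed.

Lemma kbound (k p : int) : 0 < p -> - (2 * p) < k * p -> k * p < p -> k = 0 \/ k = -1.
Proof.
move=> p0 h1 h2.
have a1 : k < 1 by rewrite -(ltr_pM2r p0) mul1r.
have a2 : -2 < k by rewrite -(ltr_pM2r p0) mulNr.
lia.
Qed.

Lemma toNat (x y : int) (p : nat) : (0 < p)%N -> y != 0 -> x ^+ 2 - 2 * y ^+ 2 = p%:Z ->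
  (0 < absz x)%N /\ (0 < absz y)%N /\ (absz x ^ 2 = p + 2 * absz y ^ 2)%N.
Proof.
move=> p0 y0 h.
have y2 := sqr_ge0 y.
have e : x ^+ 2 = p%:Z + 2 * y ^+ 2 by lia.
have x0 : x != 0.
  apply/eqP => x0; move: e; rewrite x0 expr0n /=; lia.
split; first by rewrite absz_gt0.
split; first by rewrite absz_gt0.
rewrite -!abszX e; lia.
Qed.

Lemma sq_cmp (X Y : int) : 0 < X -> 0 < X ^+ 2 - Y ^+ 2 -> Y < X.
Proof. move=> h1 h2; nia. Qed.

Lemma pos_div (u p : int) : 0 < p -> 0 < u * p -> 0 < u.
Proof. move=> h1 h2; nia. Qed.

Lemma cancel_sq (p : nat) (N : int) : (0 < p)%N -> (p ^ 2)%N%:Z * N = p%:Z ^+ 2 -> N = 1.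
Proof.
move=> p0 h; have e : (p ^ 2)%N%:Z = p%:Z ^+ 2 by lia.
rewrite e in h; have pn : p%:Z ^+ 2 != 0 by rewrite expf_neq0 //; lia.
by apply: (mulfI pn); rewrite h mulr1.
Qed.

Section Fp.
Variables (p : nat) (pr : prime p).

Lemma intr_Fp0 (w : int) : (w%:~R : 'F_p) = 0 -> (p %| w)%Z.
Proof.
rewrite dvdzE /=; case: w => n.
  by rewrite -pmulrn /= => h; rewrite (dvdn_pcharf (pchar_Fp pr)) h.
rewrite NegzE mulrNz => /eqP; rewrite oppr_eq0 -pmulrn /= => h.
by rewrite (dvdn_pcharf (pchar_Fp pr)).
Qed.

Lemma natr_Fp (z : 'F_p) : ((z : nat)%:R : 'F_p) = z.
Proof. exact: natr_Zp. Qed.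

Lemma z4 : (p %% 8 = 1)%N -> exists z : 'F_p, z ^+ 4 = -1.
Proof.
move=> hp; set k := (p %/ 8)%N.
have pk : p = (8 * k).+1 by rewrite /k; move: (divn_eq p 8); rewrite hp; lia.
have k0 : (0 < k)%N by move: (prime_gt1 pr); rewrite pk; lia.
case: (boolP [exists g : 'F_p, (g != 0) && (g ^+ (4 * k) != 1)]) => [/existsP [g /andP [g0 g1]] | /existsPn H].
  exists (g ^+ k); rewrite -exprM mulnC.
  have h8 : g ^+ (8 * k) = 1.
    have e : #|'F_p| = (8 * k).+1 by rewrite card_Fp // -pk.
    have := expf_card g; rewrite e exprS => h.
    by apply: (mulfI g0); rewrite h mulr1.
  have : (g ^+ (4 * k)) ^+ 2 == 1 by rewrite -exprM mulnC mulnA h8.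
  by rewrite sqrf_eq1 (negbTE g1) /= => /eqP.
exfalso.
pose rs := enum (predC1 (0 : 'F_p)).
have : (size rs <= 4 * k)%N.
  apply: max_unity_roots; first by rewrite muln_gt0.
    apply/allP => x; rewrite mem_enum /= => x0.
    by rewrite unity_rootE; move: (H x); rewrite (_ : (x != 0) = true) /= ?negbK //; exact: x0.
  exact: enum_uniq.
rewrite /rs -cardE cardC1 card_Fp // pk /=; lia.
Qed.

Lemma thue (s : 'F_p) : s ^+ 2 = 2 ->
  exists a b : nat, (0 < a)%N /\ (0 < b)%N /\ (a ^ 2 = p + 2 * b ^ 2)%N.
Proof.
move=> hs.
have p1 := prime_gt1 pr.
have [m /andP [hm1 hm2]] := sqrt_ex p.
have hm : (m ^ 2 < p)%N.
  rewrite ltn_neqAle hm1 andbT; apply/eqP => e.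
  case/primeP: pr => _ /(_ m); rewrite -e dvdn_mulr //= => /(_ isT) /orP [] /eqP em.
    by move: e; rewrite em; lia.
  by move: e; rewrite em; nia.
pose f := fun x : 'I_m.+1 * 'I_m.+1 => ((x.1 : nat)%:R - s * (x.2 : nat)%:R : 'F_p).
have [x [y [xy fxy]]] : exists x y, x != y /\ f x = f y.
  case: (boolP [exists x, [exists y, (x != y) && (f x == f y)]]).
    by move=> /existsP [x /existsP [y /andP [h1 /eqP h2]]]; exists x, y.
  move=> /existsPn H; exfalso.
  have inj : injective f.
    move=> x y fxy; apply/eqP; apply/negPn/negP => nxy.
    by move: (H x) => /existsPn /(_ y); rewrite nxy fxy eqxx.
  have cF : #|'I_(Zp_trunc (pdiv p)).+2| = p := card_Fp pr. rewrite card_ord in cF.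
  have := leq_card _ inj; rewrite card_prod !card_ord cF; nia.
case: x y xy fxy => [i1 j1] [i2 j2] xy fxy.
set u : int := (i1 : nat)%:Z - (i2 : nat)%:Z.
set v : int := (j1 : nat)%:Z - (j2 : nat)%:Z.
have huv : (u%:~R : 'F_p) = s * v%:~R.
  rewrite /u /v !intrB -!pmulrn.
  move: fxy; rewrite /f /= => /eqP; rewrite subr_eq => /eqP ->; ring.
have hw : (p %| u ^+ 2 - 2 * v ^+ 2)%Z.
  apply: intr_Fp0; rewrite intrB intrM !rmorphXn /= huv.
  have -> : ((2 : int)%:~R : 'F_p) = s ^+ 2 by rewrite hs.
  ring.
have bi1 := ltn_ord i1; have bi2 := ltn_ord i2; have bj1 := ltn_ord j1; have bj2 := ltn_ord j2.
have hu2 : u ^+ 2 <= (m ^ 2)%N%:Z by rewrite /u; apply: diff_sq; rewrite -ltnS.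
have hv2 : v ^+ 2 <= (m ^ 2)%N%:Z by rewrite /v; apply: diff_sq; rewrite -ltnS.
have hmp : (m ^ 2)%N%:Z < p%:Z by lia.
have v0 : v != 0.
  apply/eqP => v0; rewrite v0 mulr0 in huv.
  have := intr_Fp0 _ huv; rewrite dvdzE => hd.
  have u0 : u = 0.
    apply/eqP; rewrite -absz_eq0; apply/eqP.
    have : (`|u| < p)%N by apply: abs_lt; exact: (le_lt_trans hu2 hmp).
    move: hd; case: (absz u) => // n hd hn; move: (dvdn_leq (ltn0Sn n) hd); lia.
  move: xy; rewrite /u /v in u0 v0.
  have e1 : i1 = i2 by apply: ord_inj; lia.
  have e2 : j1 = j2 by apply: ord_inj; lia.
  by rewrite e1 e2 eqxx.
case/dvdzP: hw => k hk.
have kk : (k = 0) \/ (k = -1).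
  have s1 := sqr_ge0 u; have s2 := sqr_ge0 v.
  have p0 : 0 < p%:Z by lia.
  apply: (@kbound k p%:Z p0); rewrite -hk; lia.
case: kk => ek; rewrite ek in hk.
  rewrite mul0r in hk; move/eqP: hk; rewrite subr_eq0 => /eqP hk.
  by move: (irr2 _ _ hk) => /eqP; rewrite (negbTE v0).
exists (absz (u + 2 * v)), (absz (u + v)).
have b0 : u + v != 0.
  apply/eqP => e; have euv : u = - v by lia.
  rewrite euv sqrrN in hk; lia.
have : (u + 2 * v) ^+ 2 - 2 * (u + v) ^+ 2 = p%:Z.
  transitivity (- (u ^+ 2 - 2 * v ^+ 2)); first by ring.
  rewrite hk; ring.
move=> h; apply: toNat => //; lia.
Qed.

Lemma main2 (z : 'F_p) (a b : int) : (2 < p)%N -> z ^+ 4 = -1 -> 0 < a -> 0 < b ->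
  a ^+ 2 - 2 * b ^+ 2 = p%:Z -> ev z (mkV a b 0 (- b)) = 0 ->
  exists al : V, vmul al (s7 al) = mkV a b 0 (- b).
Proof.
move=> p2 h4 a0 b0 hp hpi.
set pi := mkV a b 0 (- b).
set zl : int := (z : nat)%:Z.
set t := mkV (- zl) 1 0 0.
have ht : ev z t = 0.
  rewrite /ev /t /zl /= mulrNz -pmulrn natr_Fp; ring.
have [g [[x [y hg]]  [[k1 hk1] [k2 hk2]]]] := vgcd pi t.
have gI : ev z g = 0 by rewrite hg evD // !evM // hpi ht !mul0r addr0.
have Npi : Nv pi = p%:Z ^+ 2 by rewrite -hp /Nv /NA /NB /pi /=; ring.
have Ng0 := Nv_ge0 g; have Nk0 := Nv_ge0 k1.
have hdiv : (absz (Nv g) %| p ^ 2)%N.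
  apply/dvdnP; exists (absz (Nv k1)).
  have : (Nv k1 * Nv g) = (p ^ 2)%N%:Z by rewrite mulrC -NvM -hk1 Npi; lia.
  lia.
case/(dvdn_pfactor _ _ pr): hdiv => j hj hNg.
have p0 : 0 < p%:Z by move: (prime_gt1 pr); lia.
have Ngj : Nv g = (p ^ j)%N%:Z by lia.
case: j hj hNg Ngj => [|[|[|j]]] // hj hNg Ngj.
- exfalso; have := vinvP g; rewrite Ngj expn0 => e1.
  have := congr1 (ev z) e1; rewrite evM // gI mul0r evc // => /esym/eqP; rewrite oner_eq0.
- have Nd : Nv g = p%:Z by rewrite Ngj; lia.
  have A0 : 0 <= NA g by rewrite /NA !addr_ge0 // sqr_ge0.
  have hD := D_id g.
  move: Nd A0 hD; rewrite /Nv; set A := NA g; set B := NB g => hNd A0 hD.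
  have DI : ev z (mkV A B 0 (- B)) = 0 by rewrite -hD evM // gI mul0r.
  set sF := z - z ^+ 3.
  have hs2 : sF ^+ 2 = 2.
    rewrite /sF; transitivity (z ^+ 2 - 2 * z ^+ 4 + z ^+ 6); first by ring.
    rewrite h4 w6 //; ring.
  have ea : (a%:~R : 'F_p) = - (b%:~R * sF).
    apply/eqP; rewrite -addr_eq0; apply/eqP; rewrite -hpi /ev /sF /=; ring.
  have eA : (A%:~R : 'F_p) = - (B%:~R * sF).
    apply/eqP; rewrite -addr_eq0; apply/eqP; rewrite -DI /ev /sF /=; ring.
  have hP1 : (p %| A * a - 2 * B * b)%Z.
    apply: intr_Fp0; rewrite intrB !intrM ea eA.
    transitivity (B%:~R * b%:~R * (sF ^+ 2 - 2) : 'F_p); first by ring.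
    by rewrite hs2 subrr mulr0.
  have hP2 : (p %| B * a - A * b)%Z.
    by apply: intr_Fp0; rewrite intrB !intrM ea eA; ring.
  case/dvdzP: hP1 => u hu; case/dvdzP: hP2 => v hv.
  have pn0 : p%:Z ^+ 2 != 0 by rewrite expf_neq0 // gt_eqF.
  have huv : u ^+ 2 - 2 * v ^+ 2 = 1.
    apply: (mulIf pn0).
    transitivity ((u * p%:Z) ^+ 2 - 2 * (v * p%:Z) ^+ 2); first by ring.
    rewrite -hu -hv.
    transitivity ((A ^+ 2 - 2 * B ^+ 2) * (a ^+ 2 - 2 * b ^+ 2)); first by ring.
    by rewrite hNd hp mul1r.
  have Apos : 0 < A.
    rewrite lt0r A0 andbT; apply/eqP => eA0; move: hNd; rewrite eA0 expr0n /=.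
    have := sqr_ge0 B; lia.
  have XY : (A * a) ^+ 2 - (2 * B * b) ^+ 2 = p%:Z ^+ 2 + 2 * p%:Z * (B ^+ 2 + b ^+ 2).
    have eA2 : A ^+ 2 = p%:Z + 2 * B ^+ 2 by rewrite -hNd; ring.
    have ea2 : a ^+ 2 = p%:Z + 2 * b ^+ 2 by rewrite -hp; ring.
    transitivity (A ^+ 2 * a ^+ 2 - 4 * B ^+ 2 * b ^+ 2); first by ring.
    rewrite eA2 ea2; ring.
  have Xp : 0 < A * a by rewrite mulr_gt0.
  have P1pos : 0 < A * a - 2 * B * b.
    have : 0 < p%:Z ^+ 2 + 2 * p%:Z * (B ^+ 2 + b ^+ 2).
      have t1 : 0 <= 2 * p%:Z * (B ^+ 2 + b ^+ 2).
        by rewrite !mulr_ge0 // ?addr_ge0 // ?sqr_ge0 // ltW.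
      have t2 : 0 < p%:Z ^+ 2 by rewrite exprn_gt0.
      lia.
    rewrite -XY => h; rewrite subr_gt0; exact: sq_cmp.
  have u0 : 0 < u by apply: (@pos_div u p%:Z p0); rewrite -hu.
  have [e [f [he hf]]] := pell _ u v (leqnn _) u0 huv.
  exists (vmul g (mkV e (-f) 0 f)).
  have hU : vmul pi (mkV u v 0 (- v)) = mkV A B 0 (- B).
    have e1 : a * u + 2 * b * v = A.
      have pz : p%:Z != 0 by rewrite gt_eqF.
      apply: (mulIf pz).
      transitivity (a * (u * p%:Z) + 2 * b * (v * p%:Z)); first by ring.
      rewrite -hu -hv -hp; ring.
    have e2 : a * v + b * u = B.
      have pz : p%:Z != 0 by rewrite gt_eqF.
      apply: (mulIf pz).
      transitivity (a * (v * p%:Z) + b * (u * p%:Z)); first by ring.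
      rewrite -hu -hv -hp; ring.
    rewrite /pi /vmul /=; congr mkV; [rewrite -e1 | rewrite -e2 | | rewrite -e2]; ring.
  rewrite fin_id hD -hU -vmulA he hf U_id.
  have -> : (e ^+ 2 - 2 * f ^+ 2) ^+ 2 = 1.
    by transitivity (u ^+ 2 - 2 * v ^+ 2); [rewrite he hf; ring | exact: huv].
  exact: vmul1.
- exfalso.
  have Nk1 : Nv k1 = 1.
    have : Nv g * Nv k1 = p%:Z ^+ 2 by rewrite -NvM -hk1 Npi.
    rewrite Ngj => h; apply: (@cancel_sq p) => //; lia.
  have ginv : g = vmul pi (vinv k1).
    have : vmul g (vmul k1 (vinv k1)) = g by rewrite vinvP Nk1 vmul1.
    by rewrite vmulA -hk1 => ->.
  have ht2 : t = vmul pi (vmul (vinv k1) k2) by rewrite hk2 ginv vmulA.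
  have s7pi : s7 pi = pi by rewrite /pi /s7 /=; congr mkV; ring.
  have : ev z (s7 t) = 0 by rewrite ht2 s7M evM // s7pi hpi mul0r.
  have -> : ev z (s7 t) = - (z * (1 + z ^+ 2)).
    rewrite /ev /s7 /t /zl /= !mulrNz -!pmulrn natr_Fp; ring.
  move/eqP; rewrite oppr_eq0 mulf_eq0 => /orP [/eqP z0|].
    by move: h4; rewrite z0 expr0n /= => /eqP; rewrite eq_sym oppr_eq0 oner_eq0.
  rewrite addr_eq0 eq_sym eqr_oppLR => /eqP z2.
  have : (2%:R : 'F_p) = 0.
    have : z ^+ 4 = 1 by rewrite (exprM z 2 2) z2 sqrrN expr1n.
    by rewrite h4 => e; rewrite mulr2n -{1}e addNr.
  move/eqP; rewrite -(dvdn_pcharf (pchar_Fp pr)) => /(dvdn_leq (ltn0Sn 1)); lia.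
Qed.
End Fp.

Lemma z2 : zeta8 ^+ 2 = 'i.
Proof.
rewrite /zeta8.
have hs : sqrtC 2 ^+ 2 = 2 :> algC := sqrtCK 2.
have hi : 'i ^+ 2 = -1 :> algC := sqrCi _.
transitivity (sqrtC 2 ^+ 2 / 4 * (1 + 2 * 'i + 'i ^+ 2) : algC).
  by field; do ?split; rewrite ?pnatr_eq0.
rewrite hs hi; field; do ?split; rewrite ?pnatr_eq0 //.
Qed.

Lemma zeta4 : zeta8 ^+ 4 = -1.
Proof. by rewrite (exprM zeta8 2 2) z2 sqrCi. Qed.

Lemma sqrt2E : sqrt2 = zeta8 - zeta8 ^+ 3.
Proof. by rewrite /sqrt2 (@w7 _ _ zeta4). Qed.

Lemma sqrt2_sq : sqrt2 ^+ 2 = 2.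
Proof.
rewrite sqrt2E; transitivity (zeta8 ^+ 2 - 2 * zeta8 ^+ 4 + zeta8 ^+ 6 : algC); first by ring.
rewrite zeta4 (@w6 _ _ zeta4); ring.
Qed.

Lemma conj_zeta : zeta8^* = zeta8 ^+ 7.
Proof.
rewrite (@w7 _ _ zeta4) exprS z2.
have sr : (sqrtC 2 : algC)^* = sqrtC 2 by apply/CrealP; apply: ger0_real; rewrite sqrtC_ge0 ler0n.
have hi : 'i ^+ 2 = -1 :> algC := sqrCi _.
have h2 : (2^-1 : algC)^* = 2^-1 by apply/CrealP; apply: ger0_real; rewrite invr_ge0 ler0n.
rewrite /zeta8 !rmorphM rmorphD rmorph1 /= conjCi sr h2.
transitivity (- (sqrtC 2 / 2 * ((1 + 'i) * 'i)) : algC); last by ring.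
rewrite mulrDl mul1r -expr2 hi; ring.
Qed.

Definition toF (v : V) : 'I_4 -> int :=
  fun k => match nat_of_ord k with 0 => v0 v | 1 => v1 v | 2 => v2 v | _ => v3 v end%N.

Lemma sigma_toF i v : sigma i (toF v) = ev (zeta8 ^+ i) v.
Proof.
rewrite /sigma !big_ord_recl big_ord0 /= /ev /toF /bump /=.
rewrite muln0 muln1 !exprM expr0; ring.
Qed.

Lemma conj_ev (w : algC) v : (ev w v)^* = ev w^* v.
Proof. by rewrite /ev !(rmorphD, rmorphM, rmorph_int, rmorphXn). Qed.

Lemma final (al : V) (a b : int) : vmul al (s7 al) = mkV a b 0 (- b) ->
  [/\ sigma 1 (toF al) * sigma 7 (toF al) = a%:~R + b%:~R * sqrt2,
      sigma 3 (toF al) * sigma 5 (toF al) = a%:~R - b%:~R * sqrt2 &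
      canon_norm2 (toF al) = 2 * (sigma 1 (toF al) * sigma 7 (toF al)) + 2 * (sigma 3 (toF al) * sigma 5 (toF al))].
Proof.
move=> h.
have h4 := zeta4.
have e1 : sigma 1 (toF al) = ev zeta8 al by rewrite sigma_toF expr1.
have e3 : sigma 3 (toF al) = ev zeta8 (s3 al) by rewrite sigma_toF ev3.
have e5 : sigma 5 (toF al) = ev zeta8 (s5 al) by rewrite sigma_toF ev5.
have e7 : sigma 7 (toF al) = ev zeta8 (s7 al) by rewrite sigma_toF ev7.
have s35 : vmul (s3 al) (s5 al) = s3 (vmul al (s7 al)) by vring.
split.
- rewrite e1 e7 -evM // h /ev /= sqrt2E; ring.
- rewrite e3 e5 -evM // s35 h /ev /s3 /= sqrt2E; ring.
rewrite /canon_norm2 !big_cons big_nil !normCK.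
have c1 : (sigma 1 (toF al))^* = sigma 7 (toF al).
  by rewrite e1 e7 conj_ev conj_zeta ev7.
have c3 : (sigma 3 (toF al))^* = sigma 5 (toF al).
  rewrite e3 e5 conj_ev conj_zeta ev7 //; congr ev; vring.
have c5 : (sigma 5 (toF al))^* = sigma 3 (toF al).
  rewrite e3 e5 conj_ev conj_zeta ev7 //; congr ev; vring.
have c7 : (sigma 7 (toF al))^* = sigma 1 (toF al).
  rewrite e1 e7 conj_ev conj_zeta ev7 //; congr ev; vring.
rewrite c1 c3 c5 c7; ring.
Qed.

Lemma s2F (p : nat) (z : 'F_p) : z ^+ 4 = -1 -> (z - z ^+ 3) ^+ 2 = 2.
Proof.
move=> h4; transitivity (z ^+ 2 - 2 * z ^+ 4 + z ^+ 6); first by ring.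
rewrite h4 (@w6 _ _ h4); ring.
Qed.

Theorem lemma4 (p : nat) :
  prime p -> (p = 1 %[mod 8])%N ->
  (exists a b : nat, (0 < a)%N /\ (0 < b)%N /\
     (p%:R : algC) = (a%:R + b%:R * sqrt2) * (a%:R - b%:R * sqrt2)) /\
  (forall a b : nat, (0 < a)%N -> (0 < b)%N ->
     (p%:R : algC) = (a%:R + b%:R * sqrt2) * (a%:R - b%:R * sqrt2) ->
     exists c : 'I_4 -> int,
       a%:R + b%:R * sqrt2 = sigma 1 c * sigma 7 c /\
       a%:R - b%:R * sqrt2 = sigma 3 c * sigma 5 c /\
       canon_norm2 c = 2 * (sigma 1 c * sigma 7 c) + 2 * (sigma 3 c * sigma 5 c) /\
       2 * (sigma 1 c * sigma 7 c) + 2 * (sigma 3 c * sigma 5 c) = 4 * a%:R).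
Proof.
move=> pr hp8.
have hp : (p %% 8 = 1)%N by rewrite hp8.
have p1 := prime_gt1 pr.
have p2 : (2 < p)%N by move: hp p1; lia.
have [z hz] := z4 p pr hp.
have hs := s2F _ _ hz.
have expand : forall a b : nat, ((a%:R + b%:R * sqrt2) * (a%:R - b%:R * sqrt2) : algC)
    = a%:R ^+ 2 - 2 * b%:R ^+ 2.
  by move=> a b; transitivity (a%:R ^+ 2 - b%:R ^+ 2 * sqrt2 ^+ 2 : algC); [ring | rewrite sqrt2_sq; ring].
split.
  have [a [b [a0 [b0 hab]]]] := thue p pr _ hs.
  exists a, b; split => //; split => //.
  rewrite expand.
  have : ((a ^ 2)%N%:R : algC) = (p + 2 * b ^ 2)%N%:R by rewrite hab.
  rewrite natrD natrM !natrX => ->; ring.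
move=> a b a0 b0 hab.
have habN : (a ^ 2 = p + 2 * b ^ 2)%N.
  apply/eqP; rewrite -(eqr_nat algC) natrD natrM !natrX.
  rewrite hab expand; apply/eqP; ring.
have hpZ : a%:Z ^+ 2 - 2 * b%:Z ^+ 2 = p%:Z by lia.
have a0' : 0 < a%:Z by lia.
have b0' : 0 < b%:Z by lia.
have [z' [hz' hev]] : exists z' : 'F_p, z' ^+ 4 = -1 /\ ev z' (mkV a b 0 (- b%:Z)) = 0.
  have : ev z (mkV a b 0 (- b%:Z)) * ev (- z) (mkV a b 0 (- b%:Z)) = 0.
    transitivity ((a%:Z ^+ 2 - 2 * b%:Z ^+ 2)%:~R : 'F_p).
      rewrite /ev /= intrB intrM !rmorphXn /=.
      have -> : ((2 : int)%:~R : 'F_p) = (z - z ^+ 3) ^+ 2 by rewrite (s2F _ _ hz).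
      ring.
    by rewrite hpZ -pmulrn pchar_Fp_0.
  move/eqP; rewrite mulf_eq0 => /orP [/eqP e|/eqP e].
    by exists z.
  exists (- z); split => //.
  by rewrite (exprM (- z) 2 2) sqrrN -exprM.
have [al hal] := main2 p pr z' a b p2 hz' a0' b0' hpZ hev.
have [f1 f2 f3] := final _ _ _ hal.
have ca : ((a%:Z)%:~R : algC) = a%:R by rewrite -pmulrn.
have cb : ((b%:Z)%:~R : algC) = b%:R by rewrite -pmulrn.
rewrite ca cb in f1 f2.
exists (toF al); split; first by rewrite f1.
split; first by rewrite f2.
split; first exact: f3.
rewrite f1 f2; ring.
Qed.
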